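(* The simplicial generators $\{h_S:\emptyset\subsetneq S\subseteq E\}$ form a basis of $A^1(X_{\mathbf a})$. In particular, monomials in them span $A^\bullet(X_{\mathbf a})$ as an abelian group.
   Context: $E=\{1,\dots,m\}$, $\mathbf a\in\mathbb Z^m_{\ge0}$, $n=\sum a_i$, $\widetilde E$ an $n$-element set, $\pi:\widetilde E\to E$ with $|\pi^{-1}(i)|=a_i$, $\mathbf e_U=\sum_{j\in U}\mathbf e_j$. The polystellahedral fan $\Sigma_{\mathbf a}\subset\mathbb R^{\widetilde E}$ has cones $\operatorname{cone}(-\mathbf e_{\widetilde E\setminus\pi^{-1}(F_1)},\dots,-\mathbf e_{\widetilde E\setminus\pi^{-1}(F_k)},\mathbf e_j:j\in I)$ for $I\subseteq\widetilde E$ and chains $F_1\subsetneq\dots\subsetneq F_k\subsetneq F_{k+1}=E$ ($k\ge0$) with $\pi^{-1}(A)\subseteq I\Rightarrow A\subseteq F_1$; $X_{\mathbf a}$ is its smooth projective toric variety and $A^\bullet(X_{\mathbf a})$ its Chow ring. For $\emptyset\subseteq T\subsetneq E$, $x_T$ is the divisor class of the ray $\mathbb R_{\ge0}(-\mathbf e_{\widetilde E\setminus\pi^{-1}(T)})$. For nonempty $S\subseteq E$, $h_S=\sum_{\emptyset\subseteq T\subsetneq E,\ T\not\supseteq S}x_T$. *)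

(* Defs.v *)
From mathcomp Require Import all_boot all_order all_algebra.
From mathcomp Require Import mpoly.
Set Implicit Arguments. Unset Strict Implicit. Unset Printing Implicit Defensive.
Import GRing.Theory.
Local Open Scope ring_scope.

(* Polystellahedral fan Sigma_a and the Chow ring of X_a, via the
   Danilov-Jurkiewicz presentation  Z[x_rho] / (I_SR + J).
   E = 'I_m, Et a finite type (the n-element set E~), pi : Et -> 'I_m. *)

Section XPoly.
Variables (m : nat) (Et : finType) (pi : Et -> 'I_m).

(* proper subsets T of E (index the rays -e_{Et \ pi^-1(T)}) *)
Definition propset := {T : {set 'I_m} | T != setT}.
Definition neset := {S : {set 'I_m} | S != set0}.

(* rays of Sigma_a: inl T  <-> -e_{Et \ pi^-1(T)},  inr j <-> e_j *)
Definition ray : finType := (propset + Et)%type.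

Definition nrays := #|{: ray}|.
Definition XPoly := {mpoly int[nrays]}.

Definition xvar (r : ray) : XPoly := 'X_(enum_rank r).

Definition xT (T : propset) : XPoly := xvar (inl T).

Definition cone_rays (I : {set Et}) (Fs : {set propset}) : {set ray} :=
  [set r : ray | match r with inl T => T \in Fs | inr j => j \in I end].

(* Fs is a chain F_1 < ... < F_k of proper subsets; F_1 is the
   intersection of the chain (= E if k = 0) *)
Definition is_chain (Fs : {set propset}) : Prop :=
  forall F G : propset, F \in Fs -> G \in Fs ->
    (val F \subset val G) \/ (val G \subset val F).

Definition F1 (Fs : {set propset}) : {set 'I_m} :=
  \bigcap_(F in Fs) val F.

Definition is_cone_of_fan (I : {set Et}) (Fs : {set propset}) : Prop :=
  is_chain Fs /\
  forall A : {set 'I_m}, pi @^-1: A \subset I -> A \subset F1 Fs.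

Definition is_face (C : {set ray}) : Prop :=
  exists I Fs, is_cone_of_fan I Fs /\ C = cone_rays I Fs.

(* linear relation for the dual basis vector e_j^*:
   sum_rho <e_j^*, v_rho> x_rho *)
Definition lin_rel (j : Et) : XPoly :=
  xvar (inr j) - \sum_(T : propset | pi j \notin val T) xT T.

Definition chow_gen (p : XPoly) : Prop :=
  (exists C : {set ray}, ~ is_face C /\ p = \prod_(r in C) xvar r)
  \/ (exists j : Et, p = lin_rel j).

Definition in_ideal (G : XPoly -> Prop) (p : XPoly) : Prop :=
  exists s : seq (XPoly * XPoly),
    (forall x, x \in s -> G x.2) /\ p = \sum_(x <- s) x.1 * x.2.

Definition chow_eq (p q : XPoly) : Prop := in_ideal chow_gen (p - q).

Definition hS (S : neset) : XPoly :=
  \sum_(T : propset | ~~ (val S \subset val T)) xT T.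

Definition linform (d : ray -> int) : XPoly :=
  \sum_(r : ray) d r *: xvar r.

Definition hcomb (c : neset -> int) : XPoly :=
  \sum_(S : neset) c S *: hS S.

Definition eval_h (q : {mpoly int[#|{: neset}|]}) : XPoly :=
  comp_mpoly [tuple hS (enum_val i) | i < #|{: neset}|] q.

End XPoly.

(* Main.v *)
Require Import Defs.
From mathcomp Require Import all_boot all_order all_algebra.
From mathcomp Require Import mpoly.
From mathcomp Require Import zify ring.
Set Implicit Arguments. Unset Strict Implicit. Unset Printing Implicit Defensive.
Import GRing.Theory.
Local Open Scope ring_scope.

Section Ideal.
Variables (m : nat) (Et : finType).
Local Notation P := (XPoly m Et).
Variable G : P -> Prop.

Lemma ideal0 : in_ideal G 0.
Proof. by exists [::]; split => //; rewrite big_nil. Qed.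

Lemma idealD p q : in_ideal G p -> in_ideal G q -> in_ideal G (p + q).
Proof.
move=> [s [Hs ->]] [t [Ht ->]]; exists (s ++ t); split; last by rewrite big_cat.
by move=> x; rewrite mem_cat => /orP [/Hs|/Ht].
Qed.

Lemma idealMl r p : in_ideal G p -> in_ideal G (r * p).
Proof.
move=> [s [Hs ->]]; exists [seq (r * x.1, x.2) | x <- s]; split.
  by move=> x /mapP [y /Hs Hy ->].
by rewrite big_map mulr_sumr; apply: eq_bigr => x _; rewrite mulrA.
Qed.

Lemma idealN p : in_ideal G p -> in_ideal G (- p).
Proof. by move=> H; rewrite -mulN1r; apply: idealMl. Qed.

Lemma idealB p q : in_ideal G p -> in_ideal G q -> in_ideal G (p - q).
Proof. by move=> H1 H2; apply: idealD => //; apply: idealN. Qed.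

Lemma ideal_gen g : G g -> in_ideal G g.
Proof.
move=> Hg; exists [:: (1, g)]; split; first by move=> x; rewrite inE => /eqP ->.
by rewrite big_seq1 mul1r.
Qed.

Lemma ideal_sum (I : Type) (r : seq I) (F : I -> P) :
  (forall i, in_ideal G (F i)) -> in_ideal G (\sum_(i <- r) F i).
Proof.
move=> H; elim: r => [|i r IH]; first by rewrite big_nil; apply: ideal0.
by rewrite big_cons; apply: idealD.
Qed.

End Ideal.

Section Span.
Variables (m : nat) (Et : finType).
Local Notation P := (XPoly m Et).

Definition inspan (p : P) := exists c : neset m -> int, hcomb Et c = p.

Lemma span0 : inspan 0.
Proof. by exists (fun _ => 0); rewrite /hcomb big1 // => S _; rewrite scale0r. Qed.

Lemma spanD p q : inspan p -> inspan q -> inspan (p + q).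
Proof.
move=> [c <-] [d <-]; exists (fun S => c S + d S).
by rewrite /hcomb -big_split; apply: eq_bigr => S _; rewrite scalerDl.
Qed.

Lemma spanZ (z : int) p : inspan p -> inspan (z *: p).
Proof.
move=> [c <-]; exists (fun S => z * c S).
by rewrite /hcomb scaler_sumr; apply: eq_bigr => S _; rewrite scalerA.
Qed.

Lemma spanN p : inspan p -> inspan (- p).
Proof. by move=> H; rewrite -scaleN1r; apply: spanZ. Qed.

Lemma spanB p q : inspan p -> inspan q -> inspan (p - q).
Proof. by move=> H1 H2; apply: spanD => //; apply: spanN. Qed.

Lemma span_sum (I : Type) (r : seq I) (Q : pred I) (F : I -> P) :
  (forall i, Q i -> inspan (F i)) -> inspan (\sum_(i <- r | Q i) F i).
Proof.
move=> H; elim: r => [|i r IH]; first by rewrite big_nil; apply: span0.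
rewrite big_cons; case: ifP => Hi //; apply: spanD => //; exact: H.
Qed.

Lemma span_hS S : inspan (hS Et S).
Proof.
exists (fun S' => (S' == S)%:R); rewrite /hcomb (bigD1 S) //= eqxx scale1r.
by rewrite big1 ?addr0 // => S' /negbTE ->; rewrite scale0r.
Qed.

Definition tot : P := \sum_(T : propset m) xT Et T.
Definition gsum (S : {set 'I_m}) : P :=
  \sum_(T : propset m | S \subset val T) xT Et T.

Lemma tot_split S : tot = hS Et S + gsum (val S).
Proof. by rewrite /tot (bigID (fun T : propset m => val S \subset val T)) /= addrC. Qed.

Lemma m_pos (T0 : propset m) : (0 < m)%N.
Proof.
case: m T0 => // T0; exfalso; case: T0 => T /negP; apply.
by apply/eqP/setP => -[i Hi].
Qed.

Lemma tot_span (T0 : propset m) : inspan tot.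
Proof.
have Hm := m_pos T0.
have Hne : [set: 'I_m] != set0 by apply/set0Pn; exists (Ordinal Hm).
pose E : neset m := exist _ setT Hne.
suff -> : tot = hS Et E by apply: span_hS.
rewrite /tot /hS; apply: eq_bigl => T /=.
by rewrite subTset (negbTE (valP T)).
Qed.

Lemma gsum_span (T0 : propset m) S : inspan (gsum S).
Proof.
have [->|Hne] := eqVneq S set0.
  suff -> : gsum set0 = tot by apply: tot_span T0.
  by rewrite /gsum /tot; apply: eq_bigl => T; rewrite sub0set.
pose S' : neset m := exist _ S Hne.
have -> : gsum S = tot - hS Et S' by rewrite (tot_split S') addrC addKr.
by apply: spanB; [apply: tot_span T0 | apply: span_hS].
Qed.

Lemma xT_span_ind k (T0 : propset m) :
  (m - #|val T0| < k)%N -> inspan (xT Et T0).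
Proof.
elim: k T0 => [//|k IH] T0 Hk.
have -> : xT Et T0 = gsum (val T0) -
   \sum_(T : propset m | (val T0 \subset val T) && (T != T0)) xT Et T.
  by rewrite /gsum (bigD1 T0) //= addrK.
apply: spanB; first (try exact: (gsum_span T0 (val T0))).
apply: span_sum => T /andP [Hsub Hne]; apply: IH.
have Hp : val T0 \proper val T.
  rewrite properEneq Hsub andbT; apply: contra Hne => /eqP H.
  by apply/eqP/val_inj.
have H1 := proper_card Hp.
have H2 : (#|val T| <= m)%N by rewrite -[X in (_ <= X)%N]card_ord max_card.
move: H1 H2 Hk; set x := #|val T0|; set y := #|val T|; clear; lia.
Qed.

Lemma xT_span T0 : inspan (xT Et T0).
Proof. by apply: (@xT_span_ind (m - #|val T0|).+1). Qed.

End Span.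

Section Chow.
Variables (m : nat) (Et : finType) (pi : Et -> 'I_m).
Local Notation P := (XPoly m Et).
Local Notation ceq := (chow_eq pi).

Lemma ceq_refl p : ceq p p.
Proof. by rewrite /chow_eq subrr; apply: ideal0. Qed.

Lemma ceq_sym p q : ceq p q -> ceq q p.
Proof. by rewrite /chow_eq => H; rewrite -opprB; apply: idealN. Qed.

Lemma ceq_trans p q r : ceq p q -> ceq q r -> ceq p r.
Proof.
rewrite /chow_eq => H1 H2; have -> : p - r = (p - q) + (q - r).
  by rewrite addrA subrK.
exact: idealD.
Qed.

Lemma ceqD p1 p2 q1 q2 : ceq p1 q1 -> ceq p2 q2 -> ceq (p1 + p2) (q1 + q2).
Proof.
rewrite /chow_eq => H1 H2; have -> : p1 + p2 - (q1 + q2) = (p1 - q1) + (p2 - q2).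
  by rewrite opprD addrACA.
exact: idealD.
Qed.

Lemma ceqM p1 p2 q1 q2 : ceq p1 q1 -> ceq p2 q2 -> ceq (p1 * p2) (q1 * q2).
Proof.
rewrite /chow_eq => H1 H2.
have -> : p1 * p2 - q1 * q2 = p2 * (p1 - q1) + q1 * (p2 - q2) by ring.
by apply: idealD; apply: idealMl.
Qed.

Lemma ceqZ (z : int) p q : ceq p q -> ceq (z *: p) (z *: q).
Proof.
rewrite /chow_eq => H; rewrite -scalerBr -mul_mpolyC; exact: idealMl.
Qed.

Lemma idealZ (z : int) p : in_ideal (chow_gen pi) p -> in_ideal (chow_gen pi) (z *: p).
Proof. by move=> H; rewrite -mul_mpolyC; apply: idealMl. Qed.

Lemma part2 d : exists c : neset m -> int, ceq (linform d) (hcomb Et c).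
Proof.
pose A : P := \sum_(T : propset m) d (inl T) *: xT Et T.
pose B : P := \sum_(j : Et) d (inr j) *: xvar (inr j : ray m Et).
pose C : P := \sum_(j : Et) d (inr j) *: \sum_(T : propset m | pi j \notin val T) xT Et T.
have [c Hc] : inspan (A + C).
  apply: spanD; first by apply: span_sum => T _; apply: spanZ; apply: xT_span.
  by apply: span_sum => j _; apply: spanZ; apply: span_sum => T _; apply: xT_span.
exists c; rewrite Hc /chow_eq.
have -> : linform d = A + B by rewrite /linform big_sumType.
have -> : A + B - (A + C) = B - C by ring.
have -> : B - C = \sum_(j : Et) d (inr j) *: lin_rel pi j.
  by rewrite /B /C -sumrB; apply: eq_bigr => j _; rewrite /lin_rel scalerBr.
apply: ideal_sum => j; apply: idealZ; apply: ideal_gen; right; by exists j.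
Qed.

End Chow.

Section Part3.
Variables (m : nat) (Et : finType) (pi : Et -> 'I_m).
Local Notation P := (XPoly m Et).
Local Notation ceq := (chow_eq pi).

Definition Qh (p : P) := exists q, ceq p (eval_h Et q).

Lemma QhD p1 p2 : Qh p1 -> Qh p2 -> Qh (p1 + p2).
Proof.
move=> [q1 H1] [q2 H2]; exists (q1 + q2).
by rewrite /eval_h raddfD; apply: ceqD.
Qed.

Lemma QhM p1 p2 : Qh p1 -> Qh p2 -> Qh (p1 * p2).
Proof.
move=> [q1 H1] [q2 H2]; exists (q1 * q2).
by rewrite /eval_h rmorphM; apply: ceqM.
Qed.

Lemma QhZ (z : int) p : Qh p -> Qh (z *: p).
Proof.
move=> [q1 H1]; exists (z *: q1).
by rewrite /eval_h comp_mpolyZ; apply: ceqZ.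
Qed.

Lemma Qh1 : Qh 1.
Proof. by exists 1; rewrite /eval_h comp_mpoly1; apply: ceq_refl. Qed.

Lemma QhX i : Qh 'X_i.
Proof.
have [c Hc] := part2 pi (fun r => ((r == enum_val i) : int)).
exists (\sum_(S : neset m) c S *: 'X_(enum_rank S)).
have -> : ('X_i : P) = linform (fun r => ((r == enum_val i) : int)).
  rewrite /linform (bigD1 (enum_val i)) //= eqxx scale1r big1 ?addr0.
    by rewrite /xvar enum_valK.
  by move=> r /negbTE ->; rewrite scale0r.
suff -> : eval_h Et (\sum_(S : neset m) c S *: 'X_(enum_rank S)) = hcomb Et c by [].
rewrite /eval_h raddf_sum /hcomb; apply: eq_bigr => S _.
rewrite /= comp_mpolyZ comp_mpolyXU -tnth_nth tnth_map tnth_ord_tuple enum_rankK //.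
Qed.

Lemma Qh_all p : Qh p.
Proof.
rewrite [p]mpolyE; elim: (msupp p) => [|mm s IH].
  by rewrite big_nil -(scale0r (1 : P)); apply: QhZ; apply: Qh1.
rewrite big_cons; apply: QhD => //; apply: QhZ.
rewrite mpolyXE_id; apply: (big_ind Qh Qh1 QhM) => i _.
elim: (mm i) => [|k IHk]; first by rewrite expr0; apply: Qh1.
by rewrite exprS; apply: QhM => //; apply: QhX.
Qed.

End Part3.

Section Deriv.
Variables (m : nat) (Et : finType).
Local Notation P := (XPoly m Et).

Definition ev0 (p : P) : int := p.@[fun _ => 0].
Definition Dr (r : ray m Et) (p : P) : int := (mderiv (enum_rank r) p).@[fun _ => 0].

Lemma ev0X r : ev0 (xvar r) = 0.
Proof. by rewrite /ev0 /xvar mevalXU. Qed.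

Lemma ev0M p q : ev0 (p * q) = ev0 p * ev0 q.
Proof. by rewrite /ev0 mevalM. Qed.

Lemma ev0_sum (I : Type) (r : seq I) (Q : pred I) (F : I -> P) :
  ev0 (\sum_(i <- r | Q i) F i) = \sum_(i <- r | Q i) ev0 (F i).
Proof. by rewrite /ev0 raddf_sum. Qed.

Lemma ev0B p q : ev0 (p - q) = ev0 p - ev0 q.
Proof. by rewrite /ev0 mevalB. Qed.

Lemma DrX r r' : Dr r (xvar r') = (r' == r)%:R.
Proof.
rewrite /Dr /xvar mderivX mevalZ mnm1E (inj_eq enum_rank_inj).
have [->|Hne] := eqVneq r' r; last by rewrite mul0r.
rewrite mevalX big1 ?mulr1 // => k _.
by rewrite mnmBE subnn expr0.
Qed.

Lemma DrD r p q : Dr r (p + q) = Dr r p + Dr r q.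
Proof. by rewrite /Dr mderivD mevalD. Qed.

Lemma DrB r p q : Dr r (p - q) = Dr r p - Dr r q.
Proof. by rewrite /Dr mderivB mevalB. Qed.

Lemma DrZ r (z : int) p : Dr r (z *: p) = z * Dr r p.
Proof. by rewrite /Dr mderivZ mevalZ. Qed.

Lemma Dr_sum r (I : Type) (s : seq I) (Q : pred I) (F : I -> P) :
  Dr r (\sum_(i <- s | Q i) F i) = \sum_(i <- s | Q i) Dr r (F i).
Proof. by rewrite /Dr (raddf_sum (mderiv (enum_rank r))) raddf_sum. Qed.

Lemma DrM r p q : Dr r (p * q) = Dr r p * ev0 q + ev0 p * Dr r q.
Proof. by rewrite /Dr /ev0 mderivM mevalD !mevalM. Qed.

End Deriv.

Section Part1.
Variables (m : nat) (a : 'I_m -> nat) (Et : finType) (pi : Et -> 'I_m).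
Hypothesis Ha : forall i, (0 < a i)%N.
Hypothesis Hpi : forall i, #|pi @^-1: [set i]| = a i.
Local Notation P := (XPoly m Et).

Definition psi (T0 : propset m) (p : P) : int :=
  Dr (inl T0) p + \sum_(j | pi j \notin val T0) Dr (inr j) p.

Lemma psiM T0 p q : psi T0 (p * q) = psi T0 p * ev0 q + ev0 p * psi T0 q.
Proof.
rewrite /psi !DrM.
under eq_bigr do rewrite DrM.
rewrite big_split /= -mulr_suml -mulr_sumr; ring.
Qed.

Lemma psiB T0 p q : psi T0 (p - q) = psi T0 p - psi T0 q.
Proof.
rewrite /psi DrB.
under eq_bigr do rewrite DrB.
rewrite sumrB; ring.
Qed.

Lemma psi_sum T0 (I : Type) (s : seq I) (Q : pred I) (F : I -> P) :
  psi T0 (\sum_(i <- s | Q i) F i) = \sum_(i <- s | Q i) psi T0 (F i).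
Proof.
rewrite /psi Dr_sum.
under [X in _ + X]eq_bigr do rewrite Dr_sum.
by rewrite exchange_big /= -big_split.
Qed.

Lemma psiZ T0 (z : int) p : psi T0 (z *: p) = z * psi T0 p.
Proof.
rewrite /psi DrZ.
under eq_bigr do rewrite DrZ.
by rewrite -mulr_sumr mulrDr.
Qed.

Lemma psi_xT T0 T : psi T0 (xT Et T) = (T == T0)%:R.
Proof.
rewrite /psi /xT DrX big1 ?addr0; last by move=> j _; rewrite DrX.
by congr (_%:R); apply/eqP/eqP => [[]|->].
Qed.

Lemma sum_pred1 (T : finType) (Q : pred T) (t0 : T) :
  \sum_(t | Q t) ((t == t0)%:R : int) = (Q t0)%:R.
Proof.
rewrite big_mkcond (bigD1 t0) //= eqxx big1 ?addr0.
  by case: (Q t0).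
by move=> t /negbTE ->; case: (Q t).
Qed.

Lemma psi_hS T0 S : psi T0 (hS Et S) = (~~ (val S \subset val T0))%:R.
Proof.
rewrite /hS psi_sum.
under eq_bigr do rewrite psi_xT.
exact: (sum_pred1 (fun T : propset m => ~~ (val S \subset val T))).
Qed.

Lemma psi_lin T0 j : psi T0 (lin_rel pi j) = 0.
Proof.
rewrite /lin_rel psiB psi_sum.
under [X in _ - X]eq_bigr do rewrite psi_xT.
rewrite (sum_pred1 (fun T : propset m => pi j \notin val T)) /psi DrX /= add0r.
have -> : \sum_(i | pi i \notin val T0) Dr (inr i) (xvar (inr j : ray m Et))
   = \sum_(i | pi i \notin val T0) ((i == j)%:R : int).
  by apply: eq_bigr => i _; rewrite DrX /= eq_sym.
by rewrite (sum_pred1 (fun i => pi i \notin val T0)) subrr.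
Qed.

End Part1.

Section Faces.
Variables (m : nat) (a : 'I_m -> nat) (Et : finType) (pi : Et -> 'I_m).
Hypothesis Ha : forall i, (0 < a i)%N.
Hypothesis Hpi : forall i, #|pi @^-1: [set i]| = a i.
Local Notation P := (XPoly m Et).

Lemma F1_set0 : F1 (set0 : {set propset m}) = setT.
Proof. by rewrite /F1 big_set0. Qed.

Lemma face0 : is_face pi (set0 : {set ray m Et}).
Proof.
exists set0, set0; split.
  split; first by move=> F G; rewrite inE.
  by move=> A _; rewrite F1_set0 subsetT.
by apply/setP => -[T|j]; rewrite !inE.
Qed.

Lemma face_inr j : is_face pi [set (inr j : ray m Et)].
Proof.
exists [set j], set0; split.
  split; first by move=> F G; rewrite inE.
  by move=> A _; rewrite F1_set0 subsetT.
by apply/setP => -[T|j']; rewrite !inE.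
Qed.

Lemma face_inl T : is_face pi [set (inl T : ray m Et)].
Proof.
exists set0, [set T]; split.
  split; first by move=> F G; rewrite !inE => /eqP -> /eqP ->; left.
  move=> A HA; apply/subsetP => i Hi; exfalso.
  have : (0 < #|pi @^-1: [set i]|)%N by rewrite Hpi Ha.
  rewrite card_gt0 => /set0Pn [j]; rewrite !inE => /eqP Hj.
  have : j \in pi @^-1: A by rewrite inE Hj.
  by move/(subsetP HA); rewrite inE.
by apply/setP => -[T'|j']; rewrite !inE.
Qed.

Lemma nonface_two C : ~ is_face pi C ->
  exists r1 r2, [/\ r1 \in C, r2 \in C & r1 != r2].
Proof.
move=> Hnf; have [HC|[x Hx]] := set_0Vmem C.
  by exfalso; apply: Hnf; rewrite HC; apply: face0.
case: (boolP [exists y in C, y != x]) => [/existsP [y /andP [Hy Hne]]|Hno].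
  by exists y, x.
exfalso; apply: Hnf.
have -> : C = [set x].
  apply/setP => y; rewrite inE; apply/idP/idP => [Hy|/eqP -> //].
  apply: contraT => Hne; have : [exists y0 in C, y0 != x] by apply/existsP; exists y; rewrite Hy Hne.
  by rewrite (negbTE Hno).
by clear Hno Hx; case: x => [T|j]; [apply: face_inl | apply: face_inr].
Qed.

Lemma gen_props g : chow_gen pi g ->
  ev0 g = 0 /\ forall T0, psi pi T0 g = 0.
Proof.
case=> [[C [Hnf ->]]|[j ->]]; last first.
  split; last by move=> T0; apply: psi_lin.
  by rewrite /lin_rel ev0B ev0X ev0_sum big1 ?subr0 // => T _; rewrite /xT ev0X.
have [r1 [r2 [H1 H2 Hne]]] := nonface_two Hnf.
rewrite (bigD1 r1) //= (bigD1 r2) /=; last by rewrite H2 eq_sym.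
split; first by rewrite ev0M ev0X mul0r.
by move=> T0; rewrite psiM ev0M !ev0X !mul0r mulr0 addr0.
Qed.

Lemma part1_psi (c : neset m -> int) : chow_eq pi (hcomb Et c) 0 ->
  forall T0 : propset m, \sum_(S : neset m | ~~ (val S \subset val T0)) c S = 0.
Proof.
move=> [s [Hs Heq]] T0.
have := congr1 (psi pi T0) Heq.
rewrite psi_sum big_seq big1; last first.
  move=> x Hx; have [E1 E2] := gen_props (Hs x Hx).
  by rewrite psiM E1 E2 mulr0 mulr0 addr0.
move=> E; rewrite -[X in _ = X]E subr0 /hcomb psi_sum big_mkcond; apply: eq_bigr => S _.
by rewrite psiZ psi_hS; case: ifP => _; rewrite ?mulr1 ?mulr0.
Qed.

End Faces.

Lemma comb (m : nat) (c : neset m -> int) :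
  (forall T0 : propset m, \sum_(S : neset m | ~~ (val S \subset val T0)) c S = 0) ->
  forall S, c S = 0.
Proof.
move=> H S.
have Hm : (0 < m)%N by case/set0Pn: (valP S) => -[i Hi] _; lia.
have Hne0 : (set0 : {set 'I_m}) != setT.
  by apply/eqP => /setP /(_ (Ordinal Hm)); rewrite !inE.
pose Z : propset m := exist _ set0 Hne0.
have Htot : \sum_(S' : neset m) c S' = 0.
  rewrite -[RHS](H Z); apply: eq_bigl => S'; by rewrite /= subset0 (valP S').
have Hsub : forall T0 : propset m, \sum_(S' : neset m | val S' \subset val T0) c S' = 0.
  by move=> T0; have := Htot; rewrite (bigID (fun S' : neset m => val S' \subset val T0)) /= H addr0.
have Hind : forall k (S' : neset m), (#|val S'| < k)%N -> val S' != setT -> c S' = 0.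
  elim=> [//|k IH] S' Hk HT.
  have := Hsub (exist _ (val S') HT); rewrite /= (bigD1 S') ?subxx //= big1 ?addr0 //.
  move=> S'' /andP [Hs Hne]; apply: IH; last first.
    by apply: contra HT => /eqP E; rewrite -subTset -E.
  have Hp : val S'' \proper val S'.
    rewrite properEneq Hs andbT; apply: contra Hne => /eqP E; apply/eqP/val_inj.
    exact: E.
  move: (proper_card Hp) Hk; set x := #|val S''|; set y := #|val S'|; clear; lia.
case: (eqVneq (val S) setT) => HS; last by apply: (Hind (#|val S|).+1).
have := Htot; rewrite (bigD1 S) //= big1 ?addr0 //.
move=> S'' Hne; apply: (Hind (#|val S''|).+1) => //; apply: contra Hne => /eqP E.
by apply/eqP/val_inj; rewrite /= E HS.
Qed.


Theorem proposition2p10 (m : nat) (a : 'I_m -> nat) (Et : finType)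
    (pi : Et -> 'I_m)
    (Ha : forall i, (0 < a i)%N)
    (Hpi : forall i, #|pi @^-1: [set i]| = a i) :
  (* the h_S are linearly independent in A^1(X_a) *)
  (forall c : neset m -> int,
     chow_eq pi (hcomb Et c) 0 -> forall S, c S = 0) /\
  (* the h_S span A^1(X_a) *)
  (forall d : ray m Et -> int,
     exists c : neset m -> int, chow_eq pi (linform d) (hcomb Et c)) /\
  (* monomials in the h_S span A^*(X_a) as an abelian group *)
  (forall p : XPoly m Et,
     exists q : {mpoly int[#|{: neset m}|]}, chow_eq pi p (eval_h Et q)).
Proof.
split; [|split].
- move=> c Hc; apply: comb; exact: (part1_psi Ha Hpi Hc).
- by move=> d; apply: part2.
- by move=> p; apply: Qh_all.
Qed.
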